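(* There are infinitely many positive integers $n$ such that $$H_{4n}(K_{2,3})\ge\left(\frac{1+\sqrt5}{2}\right)^{n-o(n)}.$$
   Context: For a graph $G$, $H_m(G)$ denotes the maximum number of Hamilton paths in the complete graph $K_m$ such that the union of any two of them contains $G$ as a subgraph. $K_{2,3}$ is the complete bipartite graph with parts of sizes 2 and 3. *)

(* Defs.v *)
From mathcomp Require Import all_boot fingroup perm.
Set Implicit Arguments. Unset Strict Implicit. Unset Printing Implicit Defensive.

(* Vertices of K_m are 'I_m; an (undirected) edge is a 2-element set {u,v}.
   A Hamilton path of K_m is identified with its edge set: the edges
   {s i, s (i+1)} for an ordering s of all m vertices. *)
Definition ham_path (m : nat) (P : {set {set 'I_m}}) : bool :=
  [exists s : {perm 'I_m},
    P == [set E : {set 'I_m} | [exists i : 'I_m, exists j : 'I_m,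
         (val j == (val i).+1) && (E == [set s i; s j])]]].

Definition contains_graph (V : finType) (e : rel V) (m : nat)
    (E : {set {set 'I_m}}) : bool :=
  [exists f : {ffun V -> 'I_m},
    injectiveb f && [forall u, forall v, e u v ==> ([set f u; f v] \in E)]].

Definition good_family (V : finType) (e : rel V) (m : nat)
    (F : {set {set {set 'I_m}}}) : bool :=
  [forall P in F, ham_path P] &&
  [forall P in F, forall Q in F, (P != Q) ==> contains_graph e (P :|: Q)].

Definition Hnum (V : finType) (e : rel V) (m : nat) : nat :=
  \max_(F : {set {set {set 'I_m}}} | good_family e F) #|F|.

Definition K23V : finType := ('I_2 + 'I_3)%type.
Definition K23e : rel K23V := fun u v =>
  match u, v with
  | inl _, inr _ | inr _, inl _ => true
  | _, _ => false
  end.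

(* Main.v *)
Require Import Defs.
From mathcomp Require Import all_boot fingroup perm zify.
Set Implicit Arguments. Unset Strict Implicit. Unset Printing Implicit Defensive.
Definition sw (p : pred nat) (i : nat) : nat :=
  if (i %% 4 == 1) && p (i %/ 4) then i + 2
  else if (i %% 4 == 3) && p (i %/ 4) then i - 2 else i.
Lemma sw0 p x : sw p (4*x) = 4*x.
Proof.
rewrite /sw. have -> : (4*x) %% 4 = 0 by lia. done.
Qed.
Lemma sw1 p x : sw p (4*x+1) = if p x then 4*x+3 else 4*x+1.
Proof.
rewrite /sw. have -> : (4*x+1) %% 4 = 1 by lia. have -> : (4*x+1) %/ 4 = x by lia.
by case: (p x) => /=; lia.
Qed.
Lemma sw2 p x : sw p (4*x+2) = 4*x+2.
Proof.
rewrite /sw. have -> : (4*x+2) %% 4 = 2 by lia. done.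
Qed.
Lemma sw3 p x : sw p (4*x+3) = if p x then 4*x+1 else 4*x+3.
Proof.
rewrite /sw. have -> : (4*x+3) %% 4 = 3 by lia. have -> : (4*x+3) %/ 4 = x by lia.
by case: (p x) => /=; lia.
Qed.
Lemma swK p : involutive (sw p).
Proof.
move=> i.
have [q [r [hr ->]]] : exists q r, r < 4 /\ i = 4*q + r by exists (i%/4), (i%%4); lia.
case: r hr => [|[|[|[|r]]]] // _; rewrite ?addn0 ?sw0 ?sw2 //.
  by rewrite sw1; case hp: (p q); rewrite ?sw1 ?sw3 hp.
by rewrite sw3; case hp: (p q); rewrite ?sw1 ?sw3 hp.
Qed.

Definition bb k (b : {ffun 'I_k -> bool}) : pred nat :=
  fun j => [exists x : 'I_k, (val x == j) && b x].

Lemma bbE k (b : {ffun 'I_k -> bool}) (x : 'I_k) : bb b x = b x.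
Proof.
apply/existsP/idP => [[y /andP [/eqP e h]]|h]; last by exists x; rewrite eqxx.
by have <- : y = x by apply: val_inj.
Qed.

Lemma bb_lt k (b : {ffun 'I_k -> bool}) j : bb b j -> j < k.
Proof. by rewrite /bb => /existsP [y /andP [/eqP <- _]]; apply: ltn_ord. Qed.

Lemma sw_lt k (b : {ffun 'I_k -> bool}) i : i < 4 * k.+1 -> sw (bb b) i < 4 * k.+1.
Proof.
rewrite /sw => hi.
case: ifP => [/andP [/eqP h1 /bb_lt h]|_]; first lia.
case: ifP => [/andP [/eqP h3 _]|_]; lia.
Qed.

Definition swo k (b : {ffun 'I_k -> bool}) (i : 'I_(4 * k.+1)) : 'I_(4 * k.+1) :=
  insubd i (sw (bb b) i).

Lemma val_swo k (b : {ffun 'I_k -> bool}) i : val (swo b i) = sw (bb b) i.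
Proof. by rewrite /swo val_insubd sw_lt. Qed.

Lemma swo_inj k (b : {ffun 'I_k -> bool}) : injective (swo b).
Proof.
move=> i j e; apply: val_inj.
by rewrite -(swK (bb b) (val i)) -(swK (bb b) (val j)) -!val_swo e.
Qed.

Definition sp k (b : {ffun 'I_k -> bool}) : {perm 'I_(4 * k.+1)} := perm (@swo_inj k b).

Definition PP k (b : {ffun 'I_k -> bool}) : {set {set 'I_(4 * k.+1)}} :=
  [set E : {set 'I_(4 * k.+1)} | [exists i : 'I_(4 * k.+1), exists j : 'I_(4 * k.+1),
         (val j == (val i).+1) && (E == [set sp b i; sp b j])]].

Lemma PP_ham k (b : {ffun 'I_k -> bool}) : ham_path (PP b).
Proof. by apply/existsP; exists (sp b). Qed.

Lemma edge_in k (b : {ffun 'I_k -> bool}) (i j : nat) (u v : 'I_(4 * k.+1)) :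
  j = i.+1 -> j < 4 * k.+1 -> val u = sw (bb b) i -> val v = sw (bb b) j ->
  [set u; v] \in PP b.
Proof.
move=> ej hj hu hv.
have hi : i < 4 * k.+1 by lia.
rewrite inE; apply/existsP; exists (Ordinal hi); apply/existsP; exists (Ordinal hj).
rewrite /= {1}ej eqxx /=; apply/eqP; congr [set _; _]; apply: val_inj;
  by rewrite permE val_swo.
Qed.

Lemma edge_notin k (b : {ffun 'I_k -> bool}) (x : 'I_k) (u v : 'I_(4 * k.+1)) :
  b x = true -> val u = 4 * x -> val v = 4 * x + 1 -> [set u; v] \notin PP b.
Proof.
move=> hb hu hv; rewrite inE; apply/existsP => [[i /existsP [j /andP [/eqP hj /eqP he]]]].
have hs : forall w : 'I_(4 * k.+1), val (sp b w) = sw (bb b) w.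
  by move=> w; rewrite permE val_swo.
have hinv : forall w w' : 'I_(4 * k.+1), w = sp b w' -> val w' = sw (bb b) w.
  by move=> w w' ->; rewrite hs swK.
have su : sw (bb b) u = 4 * x by rewrite hu sw0.
have sv : sw (bb b) v = 4 * x + 3 by rewrite hv sw1 bbE hb.
have uin : u \in [set sp b i; sp b j] by rewrite -he set21.
have vin : v \in [set sp b i; sp b j] by rewrite -he set22.
move: uin vin; rewrite !inE => /orP [] /eqP /hinv; rewrite su => h1 /orP [] /eqP /hinv;
  rewrite sv => h2; lia.
Qed.

Lemma sw_val p x r : r < 5 -> sw p (4*x + r) =
  if r == 1 then (if p x then 4*x+3 else 4*x+1)
  else if r == 3 then (if p x then 4*x+1 else 4*x+3) else 4*x+r.
Proof.
case: r => [|[|[|[|[|r]]]]] // _; rewrite ?addn0 ?sw0 ?sw1 ?sw2 ?sw3 //.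
have -> : 4 * x + 4 = 4 * x.+1 by lia. by rewrite sw0.
Qed.

Definition code k (x : 'I_k) (v : K23V) : nat :=
  match v with inl a => 4 * x + 1 + 2 * a | inr c => 4 * x + 2 * c end.

Lemma code_lt k (x : 'I_k) v : code x v < 4 * k.+1.
Proof. have := ltn_ord x; case: v => [a|c] /=; [have := ltn_ord a | have := ltn_ord c]; lia. Qed.

Lemma lt0m k : 0 < 4 * k.+1. Proof. lia. Qed.

Definition fK k (x : 'I_k) : {ffun K23V -> 'I_(4 * k.+1)} :=
  [ffun v => insubd (Ordinal (lt0m k)) (code x v)].

Lemma val_fK k (x : 'I_k) v : val (fK x v) = code x v.
Proof. by rewrite ffunE val_insubd code_lt. Qed.

Ltac solve_side h1 h2 :=
  (try lia); rewrite ?val_fK /= sw_val //= ?bbE ?h1 ?h2; lia.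

Ltac edge x r h1 h2 :=
  rewrite inE; apply/orP;
  first [ left; apply: (edge_in (i := 4 * x + r) (j := 4 * x + r.+1)); solve_side h1 h2
        | left; rewrite setUC; apply: (edge_in (i := 4 * x + r) (j := 4 * x + r.+1)); solve_side h1 h2
        | right; apply: (edge_in (i := 4 * x + r) (j := 4 * x + r.+1)); solve_side h1 h2
        | right; rewrite setUC; apply: (edge_in (i := 4 * x + r) (j := 4 * x + r.+1)); solve_side h1 h2 ].

Lemma contains_diff k (b1 b2 : {ffun 'I_k -> bool}) (x : 'I_k) :
  b1 x = false -> b2 x = true -> contains_graph K23e (PP b1 :|: PP b2).
Proof.
move=> h1 h2; have hx := ltn_ord x; apply/existsP; exists (fK x); apply/andP; split.
  apply/injectiveP => u v e; have := congr1 val e; rewrite !val_fK; clear e.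
  case: u => [[a ha]|[c hc]]; case: v => [[a' ha']|[c' hc']] /= h;
    try (congr inl; apply: val_inj => /=; lia); try (congr inr; apply: val_inj => /=; lia); lia.
apply/forallP => u; apply/forallP => v; apply/implyP.
case: u => [[[|[|a]] ha]|[[|[|[|c]]] hc]]; case: v => [[[|[|a']] ha']|[[|[|[|c']]] hc']] //= _.
- by edge x 0 h1 h2.
- by edge x 1 h1 h2.
- by edge x 3 h1 h2.
- by edge x 0 h1 h2.
- by edge x 2 h1 h2.
- by edge x 3 h1 h2.
- by edge x 0 h1 h2.
- by edge x 0 h1 h2.
- by edge x 1 h1 h2.
- by edge x 2 h1 h2.
- by edge x 3 h1 h2.
- by edge x 3 h1 h2.
Qed.

Lemma diff_bit k (b1 b2 : {ffun 'I_k -> bool}) : b1 != b2 -> exists x, b1 x != b2 x.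
Proof.
move=> ne; case/boolP: [exists x, b1 x != b2 x] => [/existsP [x hx]|]; first by exists x.
rewrite negb_exists => /forallP h; case/eqP: ne; apply/ffunP => x.
by have := h x; rewrite negbK => /eqP.
Qed.

Lemma PP_notin k (b1 b2 : {ffun 'I_k -> bool}) (x : 'I_k) :
  b1 x = false -> b2 x = true -> PP b1 != PP b2.
Proof.
move=> h1 h2; have hx := ltn_ord x.
have h0 : 4 * x < 4 * k.+1 by lia.
have h1' : 4 * x + 1 < 4 * k.+1 by lia.
apply/eqP => e.
have := edge_notin (u := Ordinal h0) (v := Ordinal h1') h2 erefl erefl.
rewrite -e (edge_in (b := b1) (i := 4 * x) (j := 4 * x + 1)) //=; first lia.
  by rewrite sw0.
by rewrite sw1 bbE h1.
Qed.

Lemma PP_inj k : injective (@PP k).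
Proof.
move=> b1 b2 e; apply/eqP; apply: contraT => /diff_bit [x].
case h1: (b1 x); case h2: (b2 x) => // _.
  by have := PP_notin h2 h1; rewrite e eqxx.
by have := PP_notin h1 h2; rewrite e eqxx.
Qed.

Definition Fam k : {set {set {set 'I_(4 * k.+1)}}} := [set PP b | b : {ffun 'I_k -> bool}].

Lemma Fam_good k : good_family K23e (Fam k).
Proof.
apply/andP; split.
  by apply/forallP => P; apply/implyP => /imsetP [b _ ->]; apply: PP_ham.
apply/forallP => P; apply/implyP => /imsetP [b1 _ ->].
apply/forallP => Q; apply/implyP => /imsetP [b2 _ ->].
apply/implyP => ne.
have ne' : b1 != b2 by apply: contraNneq ne => ->.
case: (diff_bit ne') => x; case h1: (b1 x); case h2: (b2 x) => // _.
  by rewrite setUC; apply: (contains_diff h2 h1).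
by apply: (contains_diff h1 h2).
Qed.

Lemma Hnum_ge k : 2 ^ k <= Hnum K23e (4 * k.+1).
Proof.
have -> : 2 ^ k = #|Fam k| by rewrite card_imset ?cardsT ?card_ffun ?card_bool ?card_ord //; exact: PP_inj.
rewrite /Hnum; exact: (@leq_bigmax_cond _ (fun F => good_family K23e F) (fun F => #|F|) _ (Fam_good k)).
Qed.

Lemma powE N : Nat.pow 2 N = expn 2 N. Proof. elim: N => // n IH. rewrite expnS -IH. reflexivity. Qed.

From Stdlib Require Import Reals Lra.
Open Scope R_scope.

Theorem mainTheorem4 :
  exists g : nat -> R,
    (forall eps : R, 0 < eps -> exists N : nat, forall n : nat,
        (N <= n)%nat -> Rabs (g n / INR n) < eps) /\
    (forall N : nat, exists n : nat, (N <= n)%nat /\ (0 < n)%nat /\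
        Rpower ((1 + sqrt 5) / 2) (INR n - g n)
          <= INR (Hnum K23e (4 * n))).
Proof.
exists (fun _ => 1); split.
  move=> eps heps.
  have [N hN] := INR_unbounded (/ eps).
  exists N.+1 => n hn.
  have hn' : INR N.+1 <= INR n by apply: le_INR; apply/leP.
  have hpos : 0 < INR N by apply: Rle_lt_trans (hN); apply: Rlt_le; apply: Rinv_0_lt_compat.
  rewrite S_INR in hn'.
  have hnp : 0 < INR n by lra.
  rewrite Rabs_right; last by apply: Rle_ge; apply: Rlt_le; apply: Rdiv_lt_0_compat; lra.
  have : / INR n < eps.
    rewrite -(Rinv_inv eps); apply: Rinv_lt_contravar; first by apply: Rmult_lt_0_compat => //; apply: Rinv_0_lt_compat.
    lra.
  by rewrite /Rdiv Rmult_1_l.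
move=> N; exists N.+1; split; first exact: leqnSn.
split; first by [].
have hs : sqrt 5 <= 3.
  rewrite -(sqrt_square 3); last lra.
  apply: sqrt_le_1_alt; lra.
have hs0 : 0 <= sqrt 5 by apply: sqrt_pos.
rewrite S_INR (_ : INR N + 1 - 1 = INR N); last by ring.
rewrite Rpower_pow; last lra.
apply: Rle_trans (_ : 2 ^ N <= _).
  apply: pow_incr; lra.
have -> : 2 ^ N = INR (2 ^ N)%nat by rewrite pow_INR (_ : INR 2 = 2) //; simpl; ring.
apply: le_INR; apply/leP. rewrite powE; exact: Hnum_ge.
Qed.
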